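(* Let $\mathcal{X}=\{x^{(1)},\dots,x^{(L)}\}\subset\mathbb{C}$ with $L$ distinct symbols. If a constant composition $(n,M,\mathcal{X})$-code $\mathscr{C}$ with $P_{\mathscr{C}}(x^{(\ell)})>0$ for all $\ell$ is an $(n,M,\mathcal{X},\epsilon,B,\delta)$-code for the complex AWGN channel below, then \[ R(\mathscr{C})\le H(P_{\mathscr{C}})+\frac{1}{n^2}\left(\frac{1}{12}-\sum_{\ell=1}^L\frac{1}{12P_{\mathscr{C}}(x^{(\ell)})+1}\right)+\frac1n\left(\log_2\sqrt{2\pi}-\sum_{\ell=1}^L\log_2\sqrt{2\pi P_{\mathscr{C}}(x^{(\ell)})}\right)-\frac{\log_2 n}{n}\cdot\frac{L-1}{2}, \] where $H(P_{\mathscr{C}})=-\sum_{\ell=1}^L P_{\mathscr{C}}(x^{(\ell)})\log_2 P_{\mathscr{C}}(x^{(\ell)})$.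
   Context: Channel: $f_{\boldsymbol{Y}|\boldsymbol{X}}(\boldsymbol{y}|\boldsymbol{\nu})=\prod_{m=1}^n \frac{1}{\pi\sigma^2}\exp(-|y_m-\nu_m|^2/\sigma^2)$. An $(n,M,\mathcal{X})$-code is $\{(\boldsymbol{u}(i),\mathcal{D}_i)\}_{i=1}^M$ with $\boldsymbol{u}(i)\in\mathcal{X}^n$ and pairwise disjoint $\mathcal{D}_i\subseteq\mathbb{C}^n$; $R(\mathscr{C})=\frac{\log_2 M}{n}$; $\gamma(\mathscr{C})=\frac1M\sum_i\big(1-\int_{\mathcal{D}_i}f_{\boldsymbol{Y}|\boldsymbol{X}}(\boldsymbol{y}|\boldsymbol{u}(i))\mathrm{d}\boldsymbol{y}\big)$; $e_i=k_1\sum_m|u_m(i)|^2+k_2\sum_m|u_m(i)|^4$ with positive constants $k_1,k_2$; $\theta(\mathscr{C},B)=\frac1M\sum_i\mathbb{1}_{\{e_i<B\}}$; $(n,M,\mathcal{X},\epsilon,B,\delta)$-code means $\gamma(\mathscr{C})\le\epsilon$ and $\theta(\mathscr{C},B)\le\delta$. Types: $P_{\boldsymbol{u}(i)}(x)=\frac1n\sum_{m}\mathbb{1}_{\{u_m(i)=x\}}$, $P_{\mathscr{C}}=\frac1M\sum_iP_{\boldsymbol{u}(i)}$; constant composition means $P_{\boldsymbol{u}(i)}=P_{\mathscr{C}}$ for all $i$. *)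

(* Defs.v *)
From HB Require Import structures.
From mathcomp Require Import all_boot all_order all_algebra.
From mathcomp Require Import all_classical all_reals all_analysis.
Set Implicit Arguments. Unset Strict Implicit. Unset Printing Implicit Defensive.
Import Order.TTheory GRing.Theory Num.Theory.
Import numFieldNormedType.Exports.
Local Open Scope classical_set_scope.
Local Open Scope ring_scope.

Section AWGN.
Variable R : realType.

(* Complex numbers are represented as pairs (real part, imaginary part) in R * R,
   so that C^n = n.-tuple (R * R) carries the product (Borel) sigma-algebra
   and C carries Lebesgue measure on R^2. *)
Definition cplx := (R * R)%type.

Definition csqdist (z w : cplx) : R := (z.1 - w.1) ^+ 2 + (z.2 - w.2) ^+ 2.
Definition csqnorm (z : cplx) : R := z.1 ^+ 2 + z.2 ^+ 2.

Definition log2 (x : R) : R := ln x / ln 2.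

Definition leb2 := (@lebesgue_measure R \x @lebesgue_measure R)%E.

(* Integral over C^n = C x ... x C, taken coordinate by coordinate
   (iterated Lebesgue integral; by Tonelli it is the Lebesgue integral on C^n
   for nonnegative measurable integrands). *)
Fixpoint iterint (n : nat) : (n.-tuple cplx -> \bar R) -> \bar R :=
  match n return (n.-tuple cplx -> \bar R) -> \bar R with
  | 0 => fun g => g [tuple]
  | k.+1 => fun g => (\int[leb2]_z iterint (fun t => g (cons_tuple z t)))%E
  end.

Definition awgn_density (n : nat) (sigma : R) (y nu : n.-tuple cplx) : R :=
  \prod_(m < n) ((pi * sigma ^+ 2)^-1 *
                  expR (- csqdist (tnth y m) (tnth nu m) / sigma ^+ 2)).

Definition chan_prob (n : nat) (sigma : R) (D : set (n.-tuple cplx))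
    (nu : n.-tuple cplx) : R :=
  fine (iterint (fun y => ((\1_D y : R) * awgn_density sigma y nu)%:E)).

Definition is_code (L n M : nat) (x : 'I_L -> cplx)
    (u : 'I_M -> n.-tuple cplx) (D : 'I_M -> set (n.-tuple cplx)) : Prop :=
  [/\ forall i (m : 'I_n), exists l, tnth (u i) m = x l,
      injective u,
      forall i, measurable (D i) &
      forall i j, i != j -> D i `&` D j = set0].

Definition rate (n M : nat) : R := log2 M%:R / n%:R.

Definition avg_error (n M : nat) (sigma : R) (u : 'I_M -> n.-tuple cplx)
    (D : 'I_M -> set (n.-tuple cplx)) : R :=
  M%:R^-1 * \sum_(i < M) (1 - chan_prob sigma (D i) (u i)).

Definition energy (n : nat) (k1 k2 : R) (c : n.-tuple cplx) : R :=
  k1 * \sum_(m < n) csqnorm (tnth c m) + k2 * \sum_(m < n) (csqnorm (tnth c m)) ^+ 2.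

Definition energy_outage (n M : nat) (k1 k2 B : R) (u : 'I_M -> n.-tuple cplx) : R :=
  M%:R^-1 * \sum_(i < M) (if energy k1 k2 (u i) < B then 1 else 0).

Definition is_eBd_code (n M : nat) (sigma k1 k2 eps B delta : R)
    (u : 'I_M -> n.-tuple cplx) (D : 'I_M -> set (n.-tuple cplx)) : Prop :=
  avg_error sigma u D <= eps /\ energy_outage k1 k2 B u <= delta.

Definition type_of (n : nat) (c : n.-tuple cplx) (a : cplx) : R :=
  (count (pred1 a) c)%:R / n%:R.

Definition code_type (n M : nat) (u : 'I_M -> n.-tuple cplx) (a : cplx) : R :=
  M%:R^-1 * \sum_(i < M) type_of (u i) a.

Definition constant_composition (n M : nat) (u : 'I_M -> n.-tuple cplx) : Prop :=
  forall i a, type_of (u i) a = code_type u a.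

Definition entropy2 (L : nat) (x : 'I_L -> cplx) (P : cplx -> R) : R :=
  - \sum_(l < L) P (x l) * log2 (P (x l)).

End AWGN.

(* Main.v *)
Require Import Defs.
From HB Require Import structures.
From mathcomp Require Import all_boot all_order all_algebra.
From mathcomp Require Import all_classical all_reals all_analysis.
From mathcomp Require Import ring lra.
Import Order.TTheory GRing.Theory Num.Theory.

Module CountM.
Set Implicit Arguments. Unset Strict Implicit.
Section Count.
Variable T : eqType.

Definition hd_is (a : T) (s : seq T) := if s is y :: _ then y == a else false.

Lemma sum_count_mem (xs : seq T) (s : seq T) : uniq xs -> all (mem xs) s ->
  \sum_(a <- xs) count_mem a s = size s.
Proof.
move=> uxs; elim: s => [|y s IH] /=; first by rewrite big1_seq.
move=> /andP[yx als]; rewrite big_split /= IH //.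
suff -> : \sum_(a <- xs) (y == a) = 1 by rewrite add1n.
have c1 : count_mem y xs = 1 by rewrite count_uniq_mem // yx.
rewrite -c1 -sum1_count.
rewrite [RHS]big_mkcond; apply: eq_bigr => a _; rewrite eq_sym; by case: (y == a).
Qed.

Lemma count_bound (xs : seq T) n : uniq xs -> forall (k : T -> nat) (ss : seq (seq T)),
  uniq ss ->
  (forall s, s \in ss -> [/\ size s = n, all (mem xs) s &
                           forall a, a \in xs -> count_mem a s = k a]) ->
  size ss * \prod_(a <- xs) (k a)`! <= n`!.
Proof.
move=> uxs; elim: n => [|n IH] k ss uss hss.
  case: ss uss hss => [|s0 ss] uss hss; first by rewrite mul0n.
  have [sz0 _ ck] := hss s0 (mem_head _ _).
  have -> : \prod_(a <- xs) (k a)`! = 1.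
    rewrite big1_seq // => a /andP[_ ax]; rewrite -ck //.
    by move/eqP: sz0; rewrite size_eq0 => /eqP ->.
  rewrite muln1.
  have : size (s0 :: ss) <= size [:: [::] : seq T].
    apply: uniq_leq_size => // s /hss [sz _ _]; move/eqP: sz; rewrite size_eq0 => /eqP ->.
    by rewrite mem_head.
  by [].
case: ss uss hss => [|s0 ss0] uss hss; first by rewrite mul0n.
set ss := s0 :: ss0 in uss hss *.
have [sz0 al0 ck0] := hss s0 (mem_head _ _).
have sumk : \sum_(a <- xs) k a = n.+1.
  rewrite -sz0 -(sum_count_mem uxs al0); rewrite big_seq_cond [RHS]big_seq_cond.
  by apply: eq_bigr => a /andP[ax _]; rewrite ck0.
pose ssa a := [seq behead s | s <- ss & hd_is a s].
have sub : size ss <= \sum_(a <- xs) size (ssa a).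
  have -> : \sum_(a <- xs) size (ssa a) = size (flatten [seq [seq a :: t | t <- ssa a] | a <- xs]).
    rewrite size_flatten /shape -map_comp sumnE big_map.
    by apply: eq_bigr => a _; rewrite /= size_map.
  apply: uniq_leq_size => // s sin.
  have [sz al _] := hss s sin.
  case: s sin sz al => [//|y s'] sin sz /andP[yx al].
  apply/flatten_mapP; exists y => //.
  apply/mapP; exists s' => //.
  apply/mapP; exists (y :: s') => //.
  by rewrite mem_filter /= eqxx.
apply: (leq_trans (leq_mul sub (leqnn _))).
rewrite big_distrl /= factS -sumk big_distrl /=.
rewrite big_seq_cond [X in _ <= X]big_seq_cond.
apply: leq_sum => a /andP[ax _].
case ka : (k a) => [|j].
  suff -> : ssa a = [::] by [].
  apply/eqP; rewrite -size_eq0 size_map size_filter -leqn0 leqNgt -has_count.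
  apply/hasP => -[s sin hs].
  have [_ _ cks] := hss s sin.
  move: (cks a ax); rewrite ka; clear cks.
  by case: s sin hs => [//|y s'] _ /= /eqP ->; rewrite eqxx.
pose k' b := if b == a then j else k b.
have IHa := IH k' (ssa a).
have e1 : \prod_(b <- xs) (k b)`! = (k a)`! * \prod_(b <- xs | b != a) (k b)`!.
  by rewrite (bigD1_seq a).
have e2 : \prod_(b <- xs) (k' b)`! = j`! * \prod_(b <- xs | b != a) (k b)`!.
  rewrite (bigD1_seq a) //= /k' eqxx; congr (_ * _).
  by apply: eq_bigr => b /negbTE ->.
rewrite e1 ka factS.
have -> : size (ssa a) * (j.+1 * j`! * \prod_(b <- xs | b != a) (k b)`!) =
  j.+1 * (size (ssa a) * (j`! * \prod_(b <- xs | b != a) (k b)`!)) by ring.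
rewrite -e2 leq_mul2l; apply/orP; right.
apply: IHa.
  rewrite map_inj_in_uniq ?filter_uniq //.
  move=> s t; rewrite !mem_filter => /andP[hs _] /andP[ht _].
  by case: s hs => [//|y s] /eqP ->; case: t ht => [//|z t] /eqP -> /= ->.
move=> s' /mapP[s]; rewrite mem_filter => /andP[hs sin] ->.
have [sz al cks] := hss s sin.
case: s hs sin sz al cks => [//|y s] /= /eqP -> sin [sz] /andP[_ al] cks.
split => // b bx.
have := cks b bx; rewrite /= /k'.
case: (b =P a) => [->|/eqP nba]; first by rewrite eqxx ka => -[].
by rewrite eq_sym (negbTE nba).
Qed.
End Count.

End CountM.
Import CountM.

Module Stir.
Import numFieldNormedType.Exports.
Local Open Scope ring_scope.
Section S.
Variable R : realType.
Implicit Types (f g : R -> R) (x a b : R).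

Lemma dEq {f x a} b : is_derive x 1 f a -> a = b -> is_derive x 1 f b.
Proof. by move=> H <-. Qed.
Lemma dId x : is_derive x 1 (fun y : R => y) 1.
Proof. exact: is_derive_id. Qed.
Lemma dCst x (c : R) : is_derive x 1 (fun _ : R => c) 0.
Proof. exact: is_derive_cst. Qed.
Lemma dD {f g x a b} : is_derive x 1 f a -> is_derive x 1 g b ->
  is_derive x 1 (fun y => f y + g y) (a + b).
Proof. by move=> H1 H2; have := is_deriveD H1 H2. Qed.
Lemma dN {f x a} : is_derive x 1 f a -> is_derive x 1 (fun y => - f y) (- a).
Proof. by move=> H1; have := is_deriveN H1. Qed.
Lemma dB {f g x a b} : is_derive x 1 f a -> is_derive x 1 g b ->
  is_derive x 1 (fun y => f y - g y) (a - b).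
Proof. by move=> H1 H2; have := is_deriveB H1 H2. Qed.
Lemma dM {f g x a b} : is_derive x 1 f a -> is_derive x 1 g b ->
  is_derive x 1 (fun y => f y * g y) (f x * b + g x * a).
Proof. by move=> H1 H2; have := is_deriveM H1 H2. Qed.
Lemma dX {f x a} n : is_derive x 1 f a ->
  is_derive x 1 (fun y => f y ^+ n) (n%:R * f x ^+ n.-1 * a).
Proof.
move=> H1; have -> : (fun y => f y ^+ n) = f ^+ n.
  by apply/funext => y; rewrite exprfctE.
exact: (is_deriveX n H1).
Qed.
Lemma dV {f x a} : is_derive x 1 f a -> f x != 0 ->
  is_derive x 1 (fun y => (f y)^-1) (- a / f x ^+ 2).
Proof.
move=> H1 h; have H := is_deriveV h H1; apply: dEq H _.
rewrite -[_ *: _]/(_ * _); ring.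
Qed.
Lemma dln x : 0 < x -> is_derive x 1 (@ln R) x^-1.
Proof. by move=> h; apply: is_derive1_ln. Qed.


Lemma mono_deriv (f df : R -> R) (a b : R) : a <= b ->
  (forall x, a <= x <= b -> is_derive x 1 f (df x)) ->
  (forall x, a < x < b -> 0 <= df x) -> f a <= f b.
Proof.
move=> ab hd hpos.
apply: (@ger0_derive1_ndecr R f a b) => //.
- move=> x; rewrite in_itv /= => /andP[h1 h2].
  have := hd x; rewrite (ltW h1) (ltW h2) => /(_ isT) H.
  exact: ex_derive.
- move=> x; rewrite in_itv /= => /andP[h1 h2].
  have := hd x; rewrite (ltW h1) (ltW h2) => /(_ isT) H.
  by rewrite derive1E derive_val; apply: hpos; rewrite h1 h2.
- apply: derivable_within_continuous => x; rewrite in_itv /= => /andP[h1 h2].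
  have := hd x; rewrite h1 h2 => /(_ isT) H; exact: ex_derive.
Qed.

Lemma ln_lo (y : R) : 1 <= y -> (3 * y ^+ 2 - 3) / (y ^+ 2 + 4 * y + 1) <= ln y.
Proof.
move=> y1; rewrite -subr_ge0.
pose f := fun t : R => ln t - (3 * t ^+ 2 - 3) * (t ^+ 2 + 4 * t + 1)^-1.
have f1 : f 1 = 0 by rewrite /f /= (@ln1 R) expr1n; field; lra.
have -> : ln y - (3 * y ^+ 2 - 3) / (y ^+ 2 + 4 * y + 1) = f y by [].
rewrite -f1.
pose df := fun t : R => (t - 1) ^+ 4 / (t * (t ^+ 2 + 4 * t + 1) ^+ 2).
apply: (@mono_deriv f df) => // t /andP[t1 ty].
  have t0 : 0 < t by lra.
  have Q0 : t ^+ 2 + 4 * t + 1 != 0.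
    by apply/lt0r_neq0; have := sqr_ge0 t; lra.
  have HQ := dD (dD (dX 2 (dId t)) (dM (dCst t 4) (dId t))) (dCst t 1).
  have HP := dB (dM (dCst t 3) (dX 2 (dId t))) (dCst t 3).
  apply: (dEq _ (dB (dln t t0) (dM HP (dV HQ Q0)))).
  rewrite /df /=; field; lra.
have t0 : 0 < t by lra.
rewrite /df divr_ge0 // ?mulr_ge0 ?exprn_ge0 //; try lra.
all: have := sqr_ge0 t; lra.
Qed.

Lemma ln_up (y : R) : 1 <= y ->
  ln y <= (y ^+ 3 + 9 * y ^+ 2 - 9 * y - 1) / (6 * (y ^+ 2 + y)).
Proof.
move=> y1; rewrite -subr_ge0.
pose f := fun t : R => (t ^+ 3 + 9 * t ^+ 2 - 9 * t - 1) * (6 * (t ^+ 2 + t))^-1 - ln t.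
have f1 : f 1 = 0.
  rewrite /f /= (@ln1 R) !expr1n.
  have -> : (1 + 9*1 - 9*1 - 1 : R) = 0 by ring.
  by rewrite mul0r subr0.
have -> : (y ^+ 3 + 9 * y ^+ 2 - 9 * y - 1) / (6 * (y ^+ 2 + y)) - ln y = f y by [].
rewrite -f1.
pose df := fun t : R => (t - 1) ^+ 4 / (6 * (t ^+ 2 + t) ^+ 2).
apply: (@mono_deriv f df 1 y y1) => t /andP[t1 ty].
  have t0 : 0 < t by lra.
  have tn0 : t != 0 by apply: lt0r_neq0.
  have Q0 : 6 * (t ^+ 2 + t) != 0.
    by apply/lt0r_neq0; have := sqr_ge0 t; lra.
  have HQ := dM (dCst t 6) (dD (dX 2 (dId t)) (dId t)).
  have HP := dB (dB (dD (dX 3 (dId t)) (dM (dCst t 9) (dX 2 (dId t)))) (dM (dCst t 9) (dId t))) (dCst t 1).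
  apply: (dEq _ (dB (dM HP (dV HQ Q0)) (dln t t0))).
  rewrite /df /=; field.
  rewrite tn0 andbT; apply: lt0r_neq0; have := sqr_ge0 t; lra.
rewrite /df; apply: divr_ge0; first by apply: exprn_ge0; lra.
by apply: mulr_ge0; [lra | apply: sqr_ge0].
Qed.

Definition af (k : nat) : R := ln (k`!%:R) - (k%:R + 2^-1) * ln k%:R + k%:R.

Lemma lnfS k : ln (k.+1`!%:R : R) = ln k.+1%:R + ln k`!%:R.
Proof.
rewrite factS natrM lnM // posrE ltr0n ?fact_gt0 //.
Qed.

Lemma af_step k : (0 < k)%N ->
  af k - af k.+1 = (k%:R + 2^-1) * ln (k.+1%:R / k%:R) - 1.
Proof.
move=> k0; rewrite /af lnfS lnM ?lnV ?posrE ?invr_gt0 ?ltr0n //.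
rewrite -natr1; ring.
Qed.

Lemma af_up1 k : (0 < k)%N ->
  af k - af k.+1 <= (12 * k%:R)^-1 - (12 * k.+1%:R)^-1.
Proof.
move=> k0; rewrite af_step //.
have -> : k.+1%:R = k%:R + 1 :> R by rewrite -natr1.
have : 1 <= k%:R :> R by rewrite ler1n.
move: (k%:R : R) => K K1.
have y1 : 1 <= (K + 1) / K by rewrite ler_pdivlMr; lra.
have h := ln_up _ y1.
have e : (K + 2^-1) * ((((K + 1) / K) ^+ 3 + 9 * ((K + 1) / K) ^+ 2 - 9 * ((K + 1) / K) - 1) / (6 * (((K + 1) / K) ^+ 2 + ((K + 1) / K)))) - 1
   = (12 * K)^-1 - (12 * (K + 1))^-1.
  field; rewrite !lt0r_neq0 //; nra.
rewrite -e lerD2r; apply: ler_wpM2l => //; lra.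
Qed.

Lemma af_lo1 k : (0 < k)%N ->
  (12 * k%:R + 1)^-1 - (12 * k.+1%:R + 1)^-1 <= af k - af k.+1.
Proof.
move=> k0; rewrite af_step //.
have -> : k.+1%:R = k%:R + 1 :> R by rewrite -natr1.
have : 1 <= k%:R :> R by rewrite ler1n.
move: (k%:R : R) => K K1.
have y1 : 1 <= (K + 1) / K by rewrite ler_pdivlMr; lra.
have h := ln_lo _ y1.
have e : (K + 2^-1) * ((3 * ((K + 1) / K) ^+ 2 - 3) / (((K + 1) / K) ^+ 2 + 4 * ((K + 1) / K) + 1)) - 1
   = (12 * K ^+ 2 + 12 * K + 2)^-1.
  field; rewrite !lt0r_neq0 //; nra.
apply: le_trans (_ : (K + 2^-1) * ((3 * ((K + 1) / K) ^+ 2 - 3) / (((K + 1) / K) ^+ 2 + 4 * ((K + 1) / K) + 1)) - 1 <= _); last first.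
  rewrite lerD2r; apply: ler_wpM2l => //; lra.
rewrite e.
have -> : (12 * K + 1)^-1 - (12 * (K + 1) + 1)^-1 = 12 / ((12 * K + 1) * (12 * K + 13)).
  field; rewrite !lt0r_neq0 //; nra.
rewrite ler_pdivrMr; last nra.
rewrite mulrC ler_pdivlMr; last nra.
nra.
Qed.

Lemma af_up k d : (0 < k)%N ->
  af k - af (k + d) <= (12 * k%:R)^-1 - (12 * (k + d)%:R)^-1.
Proof.
move=> k0; elim: d => [|d IH]; first by rewrite addn0 !subrr.
have h := af_up1 (k + d) (ltn_addr d k0).
rewrite addnS.
have -> : af k - af (k + d).+1 = (af k - af (k + d)) + (af (k + d) - af (k + d).+1) by ring.
apply: le_trans (lerD IH h) _; by rewrite addrA subrK.
Qed.

Lemma af_lo k d : (0 < k)%N ->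
  (12 * k%:R + 1)^-1 - (12 * (k + d)%:R + 1)^-1 <= af k - af (k + d).
Proof.
move=> k0; elim: d => [|d IH]; first by rewrite addn0 !subrr.
have h := af_lo1 (k + d) (ltn_addr d k0).
rewrite addnS.
have -> : af k - af (k + d).+1 = (af k - af (k + d)) + (af (k + d) - af (k + d).+1) by ring.
apply: le_trans _ (lerD IH h); by rewrite addrA subrK.
Qed.

Fixpoint Sw (n : nat) (t : R) : R :=
  match n with
  | 0 => t
  | 1 => sin t
  | m.+2 => cos t ^+ m.+1 * sin t * (m.+2%:R)^-1 + m.+1%:R / m.+2%:R * Sw m t
  end.

Lemma dsin (t : R) : is_derive t 1 (@sin R) (cos t).
Proof. exact: is_derive_sin. Qed.
Lemma dcos (t : R) : is_derive t 1 (@cos R) (- sin t).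
Proof. exact: is_derive_cos. Qed.

Lemma Sw_der n (t : R) : is_derive t 1 (Sw n) (cos t ^+ n).
Proof.
suff : is_derive t 1 (Sw n) (cos t ^+ n) /\ is_derive t 1 (Sw n.+1) (cos t ^+ n.+1) by case.
elim: n => [|n [IH1 IH2]].
  split; first by apply: (dEq _ (dId t)); rewrite expr0.
  by apply: (dEq _ (dsin t)); rewrite expr1.
split => //.
apply: (dEq _ (dD (dM (dM (dX n.+1 (dcos t)) (dsin t)) (dCst t (n.+2%:R)^-1))
                  (dM (dCst t (n.+1%:R / n.+2%:R)) IH1))).
have hs := cos2Dsin2 t.
have n2 : (n.+2%:R : R) != 0 by rewrite pnatr_eq0.
apply: (@eq_trans _ _ (cos t ^+ n.+2 + (- n.+1%:R / n.+2%:R * cos t ^+ n) * (cos t ^+ 2 + sin t ^+ 2 - 1))); last first.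
  by rewrite hs subrr mulr0 addr0.
rewrite /= !exprS.
have -> : (n.+2%:R : R) = n%:R + 2 by rewrite -!natr1; ring.
have -> : (n.+1%:R : R) = n%:R + 1 by rewrite -!natr1.
field; apply: lt0r_neq0; have := ler0n R n; lra.
Qed.

Lemma Sw0 n : Sw n 0 = 0.
Proof.
suff : Sw n 0 = 0 /\ Sw n.+1 0 = 0 by case.
elim: n => [|n [IH1 IH2]]; first by rewrite /= sin0.
split => //=; rewrite sin0 IH1; ring.
Qed.

Lemma Sw_pi2 m : Sw m.+2 (pi / 2) = m.+1%:R / m.+2%:R * Sw m (pi / 2).
Proof. by rewrite /= cos_pihalf expr0n /= !mul0r add0r. Qed.

Lemma Sw_prod n : n.+1%:R * Sw n.+1 (pi / 2) * Sw n (pi / 2) = pi / 2.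
Proof.
elim: n => [|n IH]; first by rewrite /= sin_pihalf !mul1r.
rewrite Sw_pi2 -[RHS]IH.
have n2 : (n.+2%:R : R) != 0 by rewrite pnatr_eq0.
by field.
Qed.

Lemma Sw_pos n : 0 < Sw n (pi / 2).
Proof.
suff : 0 < Sw n (pi / 2) /\ 0 < Sw n.+1 (pi / 2) by case.
elim: n => [|n [IH1 IH2]].
  split; first by rewrite /= divr_gt0 // pi_gt0.
  by rewrite /= sin_pihalf.
split => //; rewrite Sw_pi2; apply: mulr_gt0 => //; apply: divr_gt0; rewrite ltr0n.
Qed.

Lemma Sw_even m : Sw (m.*2) (pi / 2) =
  pi / 2 * ((m.*2)`!%:R / (4 ^+ m * m`!%:R ^+ 2)).
Proof.
elim: m => [|m IH]; first by rewrite /= fact0 expr0 mul1r expr1n invr1 !mulr1.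
rewrite doubleS Sw_pi2 IH !factS !natrM (exprS 4).
have -> : ((m.*2).+1%:R : R) = 2 * m%:R + 1 by rewrite -natr1 -muln2 natrM; ring.
have -> : ((m.*2).+2%:R : R) = 2 * m%:R + 2 by rewrite -!natr1 -muln2 natrM; ring.
have -> : (m.+1%:R : R) = m%:R + 1 by rewrite -natr1.
have h1 : (m`!%:R : R) != 0 by rewrite pnatr_eq0 -lt0n fact_gt0.
have h2 : (0 : R) <= m%:R by apply: ler0n.
have h3 : (4 ^+ m : R) != 0 by rewrite expf_neq0.
move: h1 h2 h3; move: (m`!%:R : R) (m%:R : R) (4 ^+ m : R) ((m.*2)`!%:R : R) => F M Q G h1 h2 h3.
field.
rewrite h1 h3 /=; apply/andP; split; apply: lt0r_neq0; lra.
Qed.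

Lemma Sw_mono j : Sw (j.*2.+2) (pi / 2) <= Sw (j.*2.+1) (pi / 2).
Proof.
rewrite -subr_ge0.
have -> : (0 : R) = Sw j.*2.+1 0 - Sw j.*2.+2 0 by rewrite !Sw0 subrr.
pose G := fun t => Sw j.*2.+1 t - Sw j.*2.+2 t.
pose dG := fun t : R => cos t ^+ j.*2.+1 - cos t ^+ j.*2.+2.
have p0 : (0 : R) <= pi / 2 by rewrite divr_ge0 // pi_ge0.
apply: (@mono_deriv G dG 0 (pi / 2) p0) => t.
  by move=> _; apply: (dB (Sw_der _ t) (Sw_der _ t)).
move=> /andP[t0 t1].
have c0 : 0 <= cos t by apply: cos_ge0_pihalf; apply/andP; split; lra.
have c1 := cos_le1 t.
rewrite /dG (exprS (cos t) j.*2.+1).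
have := exprn_ge0 j.*2.+1 c0.
move: (cos t ^+ j.*2.+1) => X X0; nra.
Qed.

Lemma wallis m : (0 < m)%N ->
  (pi : R) * m%:R * ((m.*2)`!%:R / (4 ^+ m * m`!%:R ^+ 2)) ^+ 2 <= 1.
Proof.
case: m => [//|j] _.
have hm := Sw_mono j.
have hp := Sw_prod j.*2.+1.
have hpos := Sw_pos j.*2.+2.
have he := Sw_even j.+1.
rewrite doubleS in he.
set W := (_ / _) in he *.
have pi0 := pi_gt0 R.
have hsq : Sw j.*2.+2 (pi / 2) ^+ 2 * j.*2.+2%:R <= pi / 2.
  rewrite -[X in _ <= X]hp.
  have h0 := ler0n R j.*2.+2.
  move: hm hpos h0; move: (Sw j.*2.+2 (pi / 2)) (Sw j.*2.+1 (pi / 2)) (j.*2.+2%:R : R).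
  move=> a b c hab ha hc; have := mulr_ge0 (ltW ha) hc; rewrite expr2; nra.
rewrite he in hsq.
have e2 : (j.*2.+2%:R : R) = 2 * j.+1%:R by rewrite -muln2 -[in RHS]natr1 -!natr1 natrM; ring.
rewrite e2 in hsq.
move: hsq.
have : 0 < (j.+1%:R : R) by rewrite ltr0n.
clear he; move: (j.+1%:R : R) W pi0 => J W pi0 J0 hsq.
rewrite -(ler_pM2l pi0) mulr1.
have -> : pi * (pi * J * W ^+ 2) = 2 * ((pi / 2 * W) ^+ 2 * (2 * J)) by field.
lra.
Qed.

Definition cst2 : R := ln (2 * pi) / 2.

Lemma af_wallis m : (0 < m)%N -> cst2 <= 2 * af m - af (m.*2).
Proof.
move=> m0.
have hw := wallis m m0.
have pi0 := pi_gt0 R.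
have M0 : (0 : R) < m%:R by rewrite ltr0n.
have F0 : (0 : R) < m`!%:R by rewrite ltr0n fact_gt0.
have F20 : (0 : R) < (m.*2)`!%:R by rewrite ltr0n fact_gt0.
have Q0 : (0 : R) < 4 ^+ m by apply: exprn_gt0.
have W0 : 0 < (m.*2)`!%:R / (4 ^+ m * m`!%:R ^+ 2) :> R.
  by apply: divr_gt0 => //; apply: mulr_gt0 => //; apply: exprn_gt0.
have := ln_le0 hw.
rewrite lnM ?posrE ?mulr_gt0 ?exprn_gt0 // lnM ?posrE // lnXn //.
rewrite lnM ?posrE ?invr_gt0 ?mulr_gt0 ?exprn_gt0 // lnV ?posrE ?mulr_gt0 ?exprn_gt0 //.
rewrite lnM ?posrE ?exprn_gt0 // !lnXn //.
have -> : (4 : R) = 2 ^+ 2 by rewrite expr2; ring.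
rewrite lnXn //.
rewrite /cst2 /af lnM ?posrE //.
have -> : ((m.*2)%:R : R) = 2 * m%:R by rewrite -muln2 natrM mulrC.
rewrite lnM ?posrE //.
move: (ln m`!%:R) (ln (m.*2)`!%:R) (ln m%:R) (ln (2 : R)) (ln pi) => F F2 lm l2 lp.
clear hw W0 Q0 F20 F0 pi0.
move=> h; rewrite -subr_ge0.
have -> : 2 * (F - (m%:R + 2^-1) * lm + m%:R) - (F2 - (2 * m%:R + 2^-1) * (l2 + lm) + 2 * m%:R) -
  (l2 + lp) / 2 = - (lp + lm + (F2 - (l2 *+ 2 *+ m + F *+ 2)) *+ 2) / 2 by field.
rewrite mulNr oppr_ge0 ler_pdivrMr // mul0r //.
Qed.

Lemma af_ge m : (0 < m)%N -> cst2 - (24 * m%:R)^-1 <= af m.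
Proof.
move=> m0.
have h1 := af_wallis m m0.
have h2 := af_up m m m0; rewrite addnn in h2.
have e : (12 * m%:R)^-1 - (12 * (m.*2)%:R)^-1 = (24 * m%:R)^-1 :> R.
  rewrite -muln2 natrM; field; rewrite pnatr_eq0 -lt0n //.
rewrite e in h2; lra.
Qed.

Lemma arch_le (X Y C : R) n : 0 <= C ->
  (forall m, (n <= m)%N -> (0 < m)%N -> X <= Y + C / m%:R) -> X <= Y.
Proof.
move=> C0 H; rewrite leNgt; apply/negP => hlt.
have e0 : 0 < X - Y by rewrite subr_gt0.
have b := archi_boundP (divr_ge0 C0 (ltW e0)).
set m := (maxn (Num.bound (C / (X - Y))) n).+1.
have hm := H m (leq_trans (leq_maxr _ _) (leqnSn _)) isT.
have m0 : (0 : R) < m%:R by rewrite ltr0n.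
have : C / m%:R < X - Y.
  rewrite ltr_pdivrMr // mulrC -ltr_pdivrMr //.
  apply: lt_le_trans b _; rewrite ler_nat /m.
  exact: leq_trans (leq_maxl _ _) (leqnSn _).
lra.
Qed.

Lemma sum_aux L (a b : R) (f : 'I_L -> R) :
  \sum_(l < L) (a + f l - b) = L%:R * a + \sum_(l < L) f l - L%:R * b.
Proof.
rewrite big_split big_split /= sumrN !sumr_const card_ord.
by rewrite -[a *+ L]mulr_natl -[b *+ L]mulr_natl.
Qed.

Lemma stir_comb n L (k : 'I_L -> nat) : (0 < n)%N -> (0 < L)%N ->
  (forall l, 0 < k l <= n)%N ->
  af n - \sum_(l < L) af (k l) <=
  (1 - L%:R) * cst2 + (12 * n%:R)^-1 - \sum_(l < L) (12 * (k l)%:R + 1)^-1.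
Proof.
move=> n0 L0 hk.
apply: (@arch_le _ _ (2 * L%:R) n); first by rewrite mulr_ge0 // ler0n.
move=> m nm m0.
have hn : af n <= af m + (12 * n%:R)^-1 - (12 * m%:R)^-1.
  have := af_up n (m - n) n0; rewrite subnKC //; lra.
have hkl : forall l, af m + (12 * (k l)%:R + 1)^-1 - (12 * m%:R + 1)^-1 <= af (k l).
  move=> l; have /andP[k0 kn] := hk l.
  have := af_lo (k l) (m - k l) k0; rewrite subnKC ?(leq_trans kn) //; lra.
have hs : \sum_(l < L) (af m + (12 * (k l)%:R + 1)^-1 - (12 * m%:R + 1)^-1) <= \sum_(l < L) af (k l).
  by apply: ler_sum => l _; apply: hkl.
rewrite sum_aux in hs.
have ha := af_ge m m0.
have L1 : (1 : R) <= L%:R by rewrite ler1n.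
have M1 : (1 : R) <= m%:R by rewrite ler1n.
move: hs ha hn; move: (af m) (af n) (\sum_(l < L) af (k l)) (\sum_(l < L) (12 * (k l)%:R + 1)^-1) => am an sk S.
move: L1 M1; move: (L%:R : R) (m%:R : R) => Lr mr L1 M1 hs ha hn.
have i0 : 0 < mr^-1 by rewrite invr_gt0; lra.
have f1 : (24 * mr)^-1 = mr^-1 / 24 by field; apply: lt0r_neq0; lra.
have f2 : (12 * mr)^-1 = mr^-1 / 12 by field; apply: lt0r_neq0; lra.
have f3 : (12 * mr + 1)^-1 <= mr^-1 / 12.
  rewrite -f2 lef_pV2 ?posrE; lra.
rewrite f1 in ha; rewrite f2 in hn.
have p1 : (1 - Lr) * am <= (1 - Lr) * (cst2 - mr^-1 / 24).
  by apply: ler_wnM2l => //; lra.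
have p2 : Lr * (12 * mr + 1)^-1 <= Lr * (mr^-1 / 12).
  by apply: ler_wpM2l => //; lra.
idtac.
have p3 : 0 <= Lr * mr^-1 by apply: mulr_ge0; lra.
move: p1 p2 p3; move: (Lr * (12 * mr + 1)^-1) => q p1 p2 p3.
nra.
Qed.
End S.

End Stir.
Import Stir.

Local Open Scope ring_scope.

Lemma ln2_le1 (R : realType) : ln (2 : R) <= 1.
Proof.
have h := expR_ge1Dx (1 : R).
rewrite -[X in _ <= X](expRK 1) ler_ln ?posrE ?expR_gt0 //; lra.
Qed.

Lemma fin_ineq (R : realType) L (K : 'I_L -> R) (N : R) : 1 <= N -> (1 < L)%N ->
  (forall l, 0 < K l <= N) ->
  (12 * N)^-1 - \sum_(l < L) (12 * K l + 1)^-1 <=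
  ln 2 / N * (12^-1 - \sum_(l < L) (12 * (K l / N) + 1)^-1).
Proof.
move=> N1 L1 hK.
have l2 : 0 <= ln (2 : R) by apply: ln_ge0; lra.
have l21 := ln2_le1 R.
have N0 : 0 < N by lra.
rewrite mulrBr mulr_sumr.
have ht : forall l, (1 - ln 2) / (13 * N) <= (12 * K l + 1)^-1 - ln 2 / N * (12 * (K l / N) + 1)^-1.
  move=> l; have /andP[k0 kN] := hK l.
  have -> : ln 2 / N * (12 * (K l / N) + 1)^-1 = ln 2 / (12 * K l + N).
    field; apply/andP; split; apply: lt0r_neq0; lra.
  have e1 : (12 * K l + N)^-1 <= (12 * K l + 1)^-1.
    rewrite lef_pV2 ?posrE; lra.
  have e2 : (13 * N)^-1 <= (12 * K l + N)^-1.
    rewrite lef_pV2 ?posrE; lra.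
  have e3 : 0 <= 1 - ln (2 : R) by lra.
  have p1 := ler_wpM2l e3 e2.
  have p2 := ler_wpM2l l2 e1.
  move: p1 p2 e1; move: ((13 * N)^-1) ((12 * K l + N)^-1) ((12 * K l + 1)^-1) => a b c.
  nra.
have hs : \sum_(l < L) ((1 - ln 2) / (13 * N)) <= \sum_(l < L) ((12 * K l + 1)^-1 - ln 2 / N * (12 * (K l / N) + 1)^-1).
  by apply: ler_sum => l _; exact: ht l.
rewrite sumr_const card_ord sumrB in hs.
have LL : (2 : R) <= L%:R by rewrite ler_nat.
have hL : (1 - ln 2) / (12 * N) <= (1 - ln (2 : R)) / (13 * N) *+ L.
  rewrite -[_ *+ L]mulr_natr.
  have -> : (1 - ln (2 : R)) / (12 * N) = ((1 - ln 2) / (13 * N)) * (13 / 12) by field; lra.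
  apply: ler_wpM2l; first by apply: divr_ge0; lra.
  lra.
have -> : ln 2 / N * 12^-1 = ln (2 : R) / (12 * N) by field; lra.
have -> : (12 * N)^-1 = 1 / (12 * N) :> R by rewrite div1r.
move: hs hL; move: (\sum_(i < L) (12 * K i + 1)^-1) (\sum_(i < L) ln 2 / N * (12 * (K i / N) + 1)^-1) => s1 s2.
have -> : (1 - ln (2 : R)) / (12 * N) = 1 / (12 * N) - ln 2 / (12 * N) by rewrite mulrBl.
lra.
Qed.

Lemma ln_sqrt (R : realType) (a : R) : 0 < a -> ln (Num.sqrt a) = ln a / 2.
Proof.
move=> a0; have s0 : 0 < Num.sqrt a by rewrite sqrtr_gt0.
rewrite -{2}(sqr_sqrtr (ltW a0)) lnXn // -mulr_natr; by field.
Qed.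

Lemma log2_ge0 (R : realType) (a : R) : 1 <= a -> 0 <= log2 a.
Proof.
move=> a1; rewrite /log2 divr_ge0 ?ln_ge0 //; lra.
Qed.

Lemma ln_prod (R : realType) L (f : 'I_L -> R) : (forall l, 0 < f l) ->
  ln (\prod_(l < L) f l) = \sum_(l < L) ln (f l).
Proof.
move=> fp.
suff [] : 0 < \prod_(l < L) f l /\ ln (\prod_(l < L) f l) = \sum_(l < L) ln (f l) by [].
apply: (big_rec2 (fun a b => 0 < a /\ ln a = b)); first by rewrite ln1 ltr01.
move=> l a b _ [a0 <-]; split; first exact: mulr_gt0.
by rewrite lnM // posrE.
Qed.

Theorem theorem2 (R : realType) (L n M : nat) (x : 'I_L -> cplx R)
    (hx : injective x) (sigma k1 k2 eps B delta : R)
    (hsigma : 0 < sigma) (hk1 : 0 < k1) (hk2 : 0 < k2)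
    (u : 'I_M -> n.-tuple (cplx R)) (D : 'I_M -> set (n.-tuple (cplx R)))
    (hcode : is_code x u D)
    (hcc : constant_composition u)
    (hpos : forall l : 'I_L, 0 < code_type u (x l))
    (hgood : is_eBd_code sigma k1 k2 eps B delta u D) :
  rate R n M <=
    entropy2 x (code_type u)
    + (n%:R ^+ 2)^-1 * (12^-1 - \sum_(l < L) (12 * code_type u (x l) + 1)^-1)
    + n%:R^-1 * (log2 (Num.sqrt (2 * pi)) -
                 \sum_(l < L) log2 (Num.sqrt (2 * pi * code_type u (x l))))
    - log2 n%:R / n%:R * ((L%:R - 1) / 2).
Proof.
case: hcode => hsym hinj _ _.
have ln2 : 0 < ln (2 : R) by apply: ln_gt0; lra.
have pi0 := pi_gt0 R.
case: L x hx hsym hpos => [|L] x hx hsym hpos.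
  have hr : rate R n M <= 0.
    rewrite /rate; case: n u D hcc hsym hinj hpos hgood => [|n] u D hcc hsym hinj hpos hgood.
      by rewrite invr0 mulr0.
    case: M u D hcc hsym hinj hpos hgood => [|M] u D hcc hsym hinj hpos hgood.
      rewrite /log2 mulr_le0_ge0 // ?invr_ge0 ?ler0n // mulr_le0_ge0 ?invr_ge0 ?ln_le0 //; lra.
    by have [[]] := hsym ord0 ord0.
  rewrite /entropy2 !big_ord0.
  have h1 : 0 <= log2 (Num.sqrt (2 * pi) : R).
    apply: log2_ge0; rewrite -[X in X <= _]sqrtr1 ler_sqrt; have := pi_ge2 R; lra.
  have h2 : 0 <= log2 n%:R / n%:R :> R.
    clear; case: n => [|n]; first by rewrite invr0 mulr0.
    by rewrite divr_ge0 ?ler0n // log2_ge0 // ler1n.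
  have h3 : 0 <= (n%:R ^+ 2)^-1 * 12^-1 :> R by rewrite mulr_ge0 ?invr_ge0 ?exprn_ge0 ?ler0n.
  have h4 : 0 <= n%:R^-1 * log2 (Num.sqrt (2 * pi)) :> R by rewrite mulr_ge0 ?invr_ge0 ?ler0n.
  apply: le_trans hr _.
  move: h1 h2 h3 h4; move: (log2 n%:R / n%:R) => q h1 h2 h3 h4.
  nra.
have n0 : (0 < n)%N.
  case: n u D hcc hsym hinj hpos hgood => [|n] // u D hcc hsym hinj hpos hgood.
  have := hpos ord0; rewrite /code_type /type_of.
  by rewrite big1 ?mulr0 ?ltxx // => i _; rewrite invr0 mulr0.
have M0 : (0 < M)%N.
  case: M u D hcc hsym hinj hpos hgood => [|M] // u D hcc hsym hinj hpos hgood.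
  by have := hpos ord0; rewrite /code_type big_ord0 mulr0 ltxx.
pose i0 := Ordinal M0.
pose k (l : 'I_L.+1) := count_mem (x l) (u i0).
have hP : forall l, code_type u (x l) = (k l)%:R / n%:R.
  by move=> l; rewrite -(hcc i0).
have nR : (0 : R) < n%:R by rewrite ltr0n.
have kpos : forall l, (0 < k l)%N.
  move=> l; have := hpos l; rewrite hP pmulr_lgt0 ?invr_gt0 // ltr0n //.
have kle : forall l, (k l <= n)%N.
  by move=> l; rewrite /k (leq_trans (count_size _ _)) // size_tuple.
pose xs := map x (enum 'I_L.+1).
have uxs : uniq xs by rewrite map_inj_uniq ?enum_uniq.
have alls : forall i, all (mem xs) (u i).
  move=> i; apply/allP => y /tnthP [m ->].
  have [l ->] := hsym i m.
  by rewrite /= map_f // mem_enum.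
have sum_xs : forall F : cplx R -> nat, \sum_(a <- xs) F a = \sum_(l < L.+1) F (x l).
  by move=> F; rewrite big_map big_enum /=.
have prod_xs : forall F : cplx R -> nat, \prod_(a <- xs) F a = \prod_(l < L.+1) F (x l).
  by move=> F; rewrite big_map big_enum /=.
have sumk : (\sum_(l < L.+1) k l)%N = n.
  by rewrite -(sum_xs (fun a => count_mem a (u i0))) sum_count_mem // size_tuple.
have cnt : (M * \prod_(l < L.+1) (k l)`! <= n`!)%N.
  rewrite -(prod_xs (fun a => (count_mem a (u i0))`!)).
  have := @count_bound _ xs n uxs (fun a => count_mem a (u i0)) (map (fun i => val (u i)) (enum 'I_M)).
  rewrite size_map size_enum_ord; apply.
    rewrite map_inj_uniq ?enum_uniq // => i j /val_inj; exact: hinj.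
  move=> s /mapP [i _ ->]; split; first by rewrite size_tuple.
    exact: alls.
  move=> a _; have := hcc i a; rewrite -(hcc i0 a) /type_of => /(congr1 (fun r => r * n%:R)).
  by rewrite !divfK ?lt0r_neq0 // => /eqP; rewrite eqr_nat => /eqP.
have KR : forall l, (0 : R) < (k l)%:R by move=> l; rewrite ltr0n.
have hlnM : ln (M%:R : R) <= ln (n`!%:R) - \sum_(l < L.+1) ln ((k l)`!%:R).
  have F0 : forall l, (0 : R) < ((k l)`!)%:R by move=> l; rewrite ltr0n fact_gt0.
  have P0 : (0 : R) < \prod_(l < L.+1) ((k l)`!)%:R by apply: prodr_gt0 => l _.
  have h1 : (M%:R * \prod_(l < L.+1) ((k l)`!)%:R : R) <= n`!%:R.
    by rewrite -natr_prod -natrM ler_nat.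
  have h2 : ln (M%:R * \prod_(l < L.+1) ((k l)`!)%:R : R) <= ln (n`!%:R : R).
    rewrite ler_ln // posrE ?ltr0n ?fact_gt0 //.
    by apply: mulr_gt0 => //; rewrite ltr0n.
  move: h2; rewrite lnM ?posrE ?ltr0n //.
  rewrite ln_prod //; lra.
have lnfE : forall j, ln (j`!%:R : R) = af R j + ((j%:R + 2^-1) * ln j%:R - j%:R).
  by move=> j; rewrite /af; ring.
rewrite lnfE (eq_bigr _ (fun l _ => lnfE (k l))) big_split /= in hlnM.
have sK : \sum_(l < L.+1) (k l)%:R = n%:R :> R by rewrite -natr_sum sumk.
set A := \sum_(l < L.+1) (k l)%:R * ln ((k l)%:R : R).
set Bs := \sum_(l < L.+1) ln ((k l)%:R : R).
set Ds := \sum_(l < L.+1) (12 * ((k l)%:R / n%:R) + 1)^-1 : R.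
have hg : \sum_(l < L.+1) (((k l)%:R + 2^-1) * ln (k l)%:R - (k l)%:R) = A + Bs / 2 - n%:R :> R.
  rewrite (eq_bigr (fun l => (k l)%:R * ln ((k l)%:R : R) + ln ((k l)%:R : R) / 2 - (k l)%:R)); last first.
    by move=> l _; ring.
  by rewrite sumrB big_split /= -mulr_suml sK.
rewrite hg in hlnM.
have hD : af R n - \sum_(l < L.+1) af R (k l) <= (1 - L.+1%:R) * cst2 R + ln 2 / n%:R * (12^-1 - Ds).
  have l2 : 0 <= ln (2 : R) by apply: ln_ge0; lra.
  have [L0|Lpos] := posnP L.
    subst L.
    rewrite /Ds !big_ord1 in sumk *; rewrite sumk subrr subrr mul0r add0r.
    rewrite divff ?lt0r_neq0 // mulr1.
    apply: mulr_ge0; first by apply: divr_ge0; lra.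
    rewrite subr_ge0 lef_pV2 ?posrE; lra.
  apply: le_trans (stir_comb R n L.+1 k n0 isT (fun l => introT andP (conj (kpos l) (kle l)))) _.
  rewrite -addrA lerD2l.
  have := @fin_ineq R L.+1 (fun l => (k l)%:R) n%:R _ Lpos _; apply.
    by rewrite ler1n.
  by move=> l; rewrite KR /= ler_nat kle.
have pi2 : (0 : R) < 2 * pi by apply: mulr_gt0 => //; lra.
have lnN : forall l, ln ((k l)%:R / n%:R : R) = ln (k l)%:R - ln n%:R.
  by move=> l; rewrite lnM ?posrE ?invr_gt0 // lnV ?posrE.
have E1 : entropy2 x (code_type u) = - ((A - n%:R * ln (n%:R : R)) / (n%:R * ln 2)).
  rewrite /entropy2; congr (- _).
  rewrite (eq_bigr (fun l => ((k l)%:R * ln ((k l)%:R : R) - (k l)%:R * ln (n%:R : R)) / (n%:R * ln 2))); last first.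
    move=> l _; rewrite hP /log2 lnN; field; apply/andP; split; apply: lt0r_neq0 => //.
  by rewrite -mulr_suml sumrB -mulr_suml sK.
have E2 : \sum_(l < L.+1) (12 * code_type u (x l) + 1)^-1 = Ds.
  by apply: eq_bigr => l _; rewrite hP.
have E3 : \sum_(l < L.+1) log2 (Num.sqrt (2 * pi * code_type u (x l))) =
    (L.+1%:R * ln (2 * pi) + Bs - L.+1%:R * ln (n%:R : R)) / (2 * ln 2).
  rewrite (eq_bigr (fun l => (ln (2 * pi) - ln (n%:R : R) + ln ((k l)%:R : R)) / (2 * ln 2))); last first.
    move=> l _; rewrite hP /log2 ln_sqrt; last by apply: mulr_gt0 => //; apply: divr_gt0.
    rewrite mulrA lnM ?posrE ?mulr_gt0 ?invr_gt0 // lnV ?posrE // lnM ?posrE //.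
    field; lra.
  rewrite -mulr_suml big_split /= sumr_const card_ord.
  rewrite -[(_ - _) *+ _]mulr_natl; congr (_ / _); rewrite /Bs; ring.
have E4 : log2 (Num.sqrt (2 * pi) : R) = ln (2 * pi) / (2 * ln 2).
  rewrite /log2 ln_sqrt //; field; lra.
rewrite E1 E2 E3 E4 /rate /log2.
set W := - (A - n%:R * ln (n%:R : R)) + ln 2 / n%:R * (12^-1 - Ds) + ln (2 * pi) / 2
   - (L.+1%:R * ln (2 * pi) + Bs - L.+1%:R * ln (n%:R : R)) / 2
   - ln (n%:R : R) * ((L.+1%:R - 1) / 2).
set Q := (X in _ <= X).
have -> : Q = W / (n%:R * ln 2).
  rewrite /Q /W; field; apply/andP; split; apply: lt0r_neq0 => //.
rewrite -mulrA -invfM [ln 2 * _]mulrC ler_pM2r ?invr_gt0 ?mulr_gt0 //.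
rewrite /W; move: hlnM hD; rewrite /cst2.
move: (ln (M%:R : R)) (af R n) (\sum_(l < L.+1) af R (k l)) (ln (2 : R) / n%:R * (12^-1 - Ds)) (ln (n%:R : R)) (ln (2 * pi : R)) (L.+1%:R : R) (n%:R : R).
move=> lm an sa T ln_ lp Lr N h1 h2.
lra.
Qed.
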